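(* Let $g>0$, $p_0<p_1<0$, $[\![\rho]\!]<0$, $\Gamma_{\mathrm{rel}}>0$ and $\lambda>0$. For each integer $n\ge1$, there exists a nontrivial solution $M$ to problem $(P_n)$ if and only if $\lambda=\lambda_n^*$, where $\lambda_n^*$ satisfies $$\frac{g[\![\rho]\!]}{n}=\Gamma_{\mathrm{rel}}^2\coth\Big(\frac{np_1}{\Gamma_{\mathrm{rel}}}\Big)-(\lambda_n^* )^2\coth\Big(\frac{n(p_1-p_0)}{\lambda_n^*}\Big).$$ Such a $\lambda_n^*>0$ exists if and only if $$\frac{g[\![\rho]\!]}{n}-\Gamma_{\mathrm{rel}}^2\coth\Big(\frac{np_1}{\Gamma_{\mathrm{rel}}}\Big)<0,$$ and if it exists it is unique. In that case the space of solutions of $(P_n)$ with $\lambda=\lambda_n^*$ is one-dimensional and spanned by $$M_n^*(p)=\begin{cases}\sinh\big(\frac{np}{\Gamma_{\mathrm{rel}}}\big), & p_1<p<0,\\ \mu\sinh\big(\frac{n(p-p_0)}{\lambda_n^*}\big), & p_0<p<p_1,\end{cases}\qquad \mu=\frac{\sinh\big(\frac{np_1}{\Gamma_{\mathrm{rel}}}\big)}{\sinh\big(\frac{n(p_1-p_0)}{\lambda_n^*}\big)} .$$ Finally, there are nontrivial solutions to $(P_0)$ if and only if $\lambda=\lambda_0$, where $\lambda_0^3=-g[\![\rho]\!](p_1-p_0)$.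
   Context: Let $a_\lambda(p)=\Gamma_{\mathrm{rel}}$ for $p_1<p<0$ and $a_\lambda(p)=\lambda$ for $p_0<p<p_1$. For $f$ defined on both sides of $p_1$, $[\![f]\!]=f(p_1^+)-f(p_1^-)$. Problem $(P_n)$, $n\ge1$: find $M\in C([p_0,0])$, $C^2$ on $[p_0,p_1]$ and on $[p_1,0]$, with $a_\lambda^2M_{pp}=n^2M$ on $(p_0,p_1)\cup(p_1,0)$, $[\![a_\lambda^3M_p]\!]=g[\![\rho]\!]M(p_1)$, $M(p_0)=0$, $M(0)=0$. Problem $(P_0)$: same regularity, with $a_\lambda^2M_{pp}=0$ on $(p_0,p_1)\cup(p_1,0)$, $[\![a_\lambda^3M_p]\!]=g[\![\rho]\!]M(p_1)$, $M(p_0)=0$, $M(0)=M(p_1)$. *)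

(* Defs.v *)
From Stdlib Require Import Reals.
From Coquelicot Require Import Coquelicot.
Open Scope R_scope.

Definition coth (x : R) : R := cosh x / sinh x.

(** F is a C^2 function on all of R. A function is "C^2 on the closed
    interval [a,b]" iff it is the restriction to [a,b] of such an F
    (one-sided derivatives at the endpoints are then Derive F a, Derive F b). *)
Definition C2_global (F : R -> R) : Prop :=
  (forall x, ex_derive F x) /\
  (forall x, ex_derive (Derive F) x) /\
  (forall x, continuous (Derive (Derive F)) x).

Definition a_lam (Grel lam p1 p : R) : R := if Rlt_dec p1 p then Grel else lam.

(** M solves (P_n) (n >= 1) with parameters g, jump [[rho]] = J,
    Gamma_rel = Grel, lambda = lam, p0, p1.
    FL, FR are C^2 extensions of M restricted to [p0,p1] and [p1,0];
    Derive FR p1 = M_p(p1^+), Derive FL p1 = M_p(p1^-).  *)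
Definition solves_Pn (g J Grel lam p0 p1 : R) (n : nat) (M : R -> R) : Prop :=
  exists FL FR : R -> R,
    C2_global FL /\ C2_global FR /\
    (forall p, p0 <= p <= p1 -> FL p = M p) /\
    (forall p, p1 <= p <= 0 -> FR p = M p) /\
    (forall p, p0 < p < p1 ->
        (a_lam Grel lam p1 p) ^ 2 * Derive (Derive FL) p = (INR n) ^ 2 * M p) /\
    (forall p, p1 < p < 0 ->
        (a_lam Grel lam p1 p) ^ 2 * Derive (Derive FR) p = (INR n) ^ 2 * M p) /\
    Grel ^ 3 * Derive FR p1 - lam ^ 3 * Derive FL p1 = g * J * M p1 /\
    M p0 = 0 /\ M 0 = 0.

Definition solves_P0 (g J Grel lam p0 p1 : R) (M : R -> R) : Prop :=
  exists FL FR : R -> R,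
    C2_global FL /\ C2_global FR /\
    (forall p, p0 <= p <= p1 -> FL p = M p) /\
    (forall p, p1 <= p <= 0 -> FR p = M p) /\
    (forall p, p0 < p < p1 ->
        (a_lam Grel lam p1 p) ^ 2 * Derive (Derive FL) p = 0) /\
    (forall p, p1 < p < 0 ->
        (a_lam Grel lam p1 p) ^ 2 * Derive (Derive FR) p = 0) /\
    Grel ^ 3 * Derive FR p1 - lam ^ 3 * Derive FL p1 = g * J * M p1 /\
    M p0 = 0 /\ M 0 = M p1.

Definition nontrivial (p0 : R) (M : R -> R) : Prop :=
  exists p, p0 <= p <= 0 /\ M p <> 0.

Definition disp_eq (g J Grel p0 p1 : R) (n : nat) (lam : R) : Prop :=
  g * J / INR n = Grel ^ 2 * coth (INR n * p1 / Grel)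
                  - lam ^ 2 * coth (INR n * (p1 - p0) / lam).

Definition Mstar (Grel p0 p1 : R) (n : nat) (lam : R) (p : R) : R :=
  let mu := sinh (INR n * p1 / Grel) / sinh (INR n * (p1 - p0) / lam) in
  if Rle_dec p1 p then sinh (INR n * p / Grel)
  else mu * sinh (INR n * (p - p0) / lam).

(* Main.v *)
Require Import Defs.
From Stdlib Require Import Reals Lra Lia.
From Coquelicot Require Import Coquelicot.
Open Scope R_scope.

Lemma const_on (f : R -> R) (a b : R) :
  (forall x, ex_derive f x) -> (forall x, a < x < b -> Derive f x = 0) ->
  forall x, a <= x <= b -> f x = f a.
Proof.
  intros Hd H0 x Hx.
  destruct (Req_dec x a) as [->|Hne]; [reflexivity|].
  destruct (MVT_gen f a x (fun _ => 0)) as [c [_ Hc]].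
  - intros y Hy. rewrite Rmin_left in Hy by lra. rewrite Rmax_right in Hy by lra.
    rewrite <- (H0 y) by lra. apply Derive_correct, Hd.
  - intros y _. apply continuity_pt_filterlim. apply (ex_derive_continuous (K:=R_AbsRing) (V:=R_NormedModule)), Hd.
  - lra.
Qed.

Lemma ode_exp (F : R -> R) (k a b c : R) :
  C2_global F -> 0 < k ->
  (forall p, a < p < b -> Derive (Derive F) p = k ^ 2 * F p) ->
  exists al be, forall p, a <= p <= b ->
    F p = al * exp (k * (p - c)) + be * exp (- (k * (p - c))) /\
    Derive F p = k * al * exp (k * (p - c)) - k * be * exp (- (k * (p - c))).
Proof.
  intros [H1 [H2 H3]] Hk Hode.
  set (P := fun p => (Derive F p + k * F p) * exp (- (k * (p - c)))).
  set (Q := fun p => (Derive F p - k * F p) * exp (k * (p - c))).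
  assert (HP : forall p, is_derive P p
    ((Derive (Derive F) p + k * Derive F p) * exp (- (k * (p - c)))
     + (Derive F p + k * F p) * (- k * exp (- (k * (p - c)))))).
  { intros p. unfold P. auto_derive; repeat split; auto; change (fun x => Derive F x) with (Derive F); change (fun x => F x) with F; unfold Rminus; ring. }
  assert (HQ : forall p, is_derive Q p
    ((Derive (Derive F) p - k * Derive F p) * exp (k * (p - c))
     + (Derive F p - k * F p) * (k * exp (k * (p - c))))).
  { intros p. unfold Q. auto_derive; repeat split; auto; change (fun x => Derive F x) with (Derive F); change (fun x => F x) with F; unfold Rminus; ring. }
  assert (CP : forall x, a <= x <= b -> P x = P a).
  { apply const_on. intros x; eexists; apply HP.
    intros x Hx; rewrite (is_derive_unique _ _ _ (HP x)), (Hode x Hx); ring. }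
  assert (CQ : forall x, a <= x <= b -> Q x = Q a).
  { apply const_on. intros x; eexists; apply HQ.
    intros x Hx; rewrite (is_derive_unique _ _ _ (HQ x)), (Hode x Hx); ring. }
  exists (P a / (2 * k)), (- Q a / (2 * k)).
  intros p Hp.
  rewrite <- (CP p Hp), <- (CQ p Hp).
  unfold P, Q. rewrite exp_Ropp.
  assert (exp (k * (p - c)) > 0) by apply exp_pos.
  split; field; lra.
Qed.

Lemma ode_lin (F : R -> R) (a b : R) :
  C2_global F ->
  (forall p, a < p < b -> Derive (Derive F) p = 0) ->
  forall p, a <= p <= b -> F p = F a + Derive F a * (p - a) /\ Derive F p = Derive F a.
Proof.
  intros [H1 [H2 H3]] H0.
  assert (C1 : forall p, a <= p <= b -> Derive F p = Derive F a).
  { apply const_on; auto. }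
  set (G := fun p => F p - Derive F a * p).
  assert (HG : forall p, is_derive G p (Derive F p - Derive F a)).
  { intros p; unfold G. auto_derive. apply H1. change (fun x => F x) with F. ring. }
  assert (CG : forall p, a <= p <= b -> G p = G a).
  { apply const_on. intros x; eexists; apply HG.
    intros x Hx; rewrite (is_derive_unique _ _ _ (HG x)), C1; [ring|lra]. }
  intros p Hp. split; [|auto]. specialize (CG p Hp). unfold G in CG. lra.
Qed.

Lemma sh_C2 (A k b : R) :
  C2_global (fun p => A * sinh (k * p + b)) /\
  (forall p, Derive (fun p => A * sinh (k * p + b)) p = A * k * cosh (k * p + b)) /\
  (forall p, Derive (Derive (fun p => A * sinh (k * p + b))) p = A * k ^ 2 * sinh (k * p + b)).
Proof.
  assert (D1 : forall p, is_derive (fun p => A * sinh (k * p + b)) p (A * k * cosh (k * p + b))).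
  { intros p. unfold sinh, cosh. auto_derive; auto. field. }
  assert (D2 : forall p, is_derive (fun p => A * k * cosh (k * p + b)) p (A * k ^ 2 * sinh (k * p + b))).
  { intros p. unfold sinh, cosh. auto_derive; auto. field. }
  assert (E1 : forall p, Derive (fun p => A * sinh (k * p + b)) p = A * k * cosh (k * p + b)).
  { intros p; apply is_derive_unique, D1. }
  assert (E2 : forall p, Derive (Derive (fun p => A * sinh (k * p + b))) p = A * k ^ 2 * sinh (k * p + b)).
  { intros p. rewrite (Derive_ext _ _ _ E1). apply is_derive_unique, D2. }
  split; [|split; auto].
  split; [intros x; eexists; apply D1|]. split.
  - intros x. eexists. apply (is_derive_ext (fun p => A * k * cosh (k * p + b))); [intros t; symmetry; apply E1|apply D2]. 
  - intros x. apply (continuous_ext (fun p => A * k ^ 2 * sinh (k * p + b))).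
    intros t; symmetry; apply E2.
    apply (ex_derive_continuous (K:=R_AbsRing) (V:=R_NormedModule)).
    unfold sinh. auto_derive; auto.
Qed.

Lemma lin_C2 (A B : R) :
  C2_global (fun p => A * p + B) /\ (forall p, Derive (fun p => A * p + B) p = A) /\
  (forall p, Derive (Derive (fun p => A * p + B)) p = 0).
Proof.
  assert (E1 : forall p, Derive (fun p => A * p + B) p = A).
  { intros p; apply is_derive_unique. auto_derive; auto; ring. }
  assert (E2 : forall p, Derive (Derive (fun p => A * p + B)) p = 0).
  { intros p. rewrite (Derive_ext _ _ _ E1). apply Derive_const. }
  split; [|auto]. split; [intros x; auto_derive; auto|]. split.
  - intros x. eexists. apply (is_derive_ext (fun _ => A)); [intros t; symmetry; apply E1|apply is_derive_const].
  - intros x. apply (continuous_ext (fun _ => 0)). intros t; symmetry; apply E2.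
    apply continuous_const.
Qed.

Lemma sinh_pos x : 0 < x -> 0 < sinh x.
Proof. intros. unfold sinh. assert (exp (-x) < exp x) by (apply exp_increasing; lra). lra. Qed.
Lemma sinh_neg x : x < 0 -> sinh x < 0.
Proof. intros. unfold sinh. assert (exp x < exp (-x)) by (apply exp_increasing; lra). lra. Qed.

Lemma Pn_struct g J G lam p0 p1 n M :
  p0 < p1 -> p1 < 0 -> 0 < G -> 0 < lam -> (1 <= n)%nat ->
  solves_Pn g J G lam p0 p1 n M ->
  exists A B,
    (forall p, p1 <= p <= 0 -> M p = A * sinh (INR n * p / G)) /\
    (forall p, p0 <= p <= p1 -> M p = B * sinh (INR n * (p - p0) / lam)) /\
    G ^ 3 * (A * (INR n / G) * cosh (INR n * p1 / G))
      - lam ^ 3 * (B * (INR n / lam) * cosh (INR n * (p1 - p0) / lam)) = g * J * M p1.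
Proof.
  intros Hp01 Hp1 HG Hl Hn [FL [FR [CL [CR [EL [ER [OL [OR [Jmp [B0 B1]]]]]]]]]].
  assert (Hn0 : 0 < INR n) by (apply lt_0_INR; lia).
  destruct (ode_exp FR (INR n / G) p1 0 0 CR) as [a1 [b1 HR]].
  { apply Rdiv_lt_0_compat; lra. }
  { intros p Hp. specialize (OR p Hp). unfold a_lam in OR.
    destruct (Rlt_dec p1 p); [|lra]. rewrite <- ER in OR by lra.
    apply (Rmult_eq_reg_l (G ^ 2)); [|apply pow_nonzero; lra]. rewrite OR. field. lra. }
  destruct (ode_exp FL (INR n / lam) p0 p1 p0 CL) as [a2 [b2 HL]].
  { apply Rdiv_lt_0_compat; lra. }
  { intros p Hp. specialize (OL p Hp). unfold a_lam in OL.
    destruct (Rlt_dec p1 p); [lra|]. rewrite <- EL in OL by lra.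
    apply (Rmult_eq_reg_l (lam ^ 2)); [|apply pow_nonzero; lra]. rewrite OL. field. lra. }
  assert (Hb1 : b1 = - a1).
  { destruct (HR 0) as [H _]; [lra|]. rewrite ER in H by lra. rewrite B1 in H.
    replace (INR n / G * (0 - 0)) with 0 in H by ring. rewrite Ropp_0, exp_0 in H. lra. }
  assert (Hb2 : b2 = - a2).
  { destruct (HL p0) as [H _]; [lra|]. rewrite EL in H by lra. rewrite B0 in H.
    replace (INR n / lam * (p0 - p0)) with 0 in H by ring. rewrite Ropp_0, exp_0 in H. lra. }
  subst b1 b2.
  exists (2 * a1), (2 * a2). split; [|split].
  - intros p Hp. rewrite <- ER by lra. destruct (HR p Hp) as [H _]. rewrite H.
    unfold sinh. replace (INR n * p / G) with (INR n / G * (p - 0)) by (field; lra). field.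
  - intros p Hp. rewrite <- EL by lra. destruct (HL p Hp) as [H _]. rewrite H.
    unfold sinh. replace (INR n * (p - p0) / lam) with (INR n / lam * (p - p0)) by (field; lra). field.
  - rewrite <- Jmp. destruct (HR p1) as [_ H1]; [lra|]. destruct (HL p1) as [_ H2]; [lra|].
    rewrite H1, H2. unfold cosh.
    replace (INR n * p1 / G) with (INR n / G * (p1 - 0)) by (field; lra).
    replace (INR n * (p1 - p0) / lam) with (INR n / lam * (p1 - p0)) by (field; lra). field. all: lra.
Qed.

Lemma Pn_from_c g J G lam p0 p1 n M c :
  p0 < p1 -> p1 < 0 -> 0 < G -> 0 < lam -> (1 <= n)%nat ->
  disp_eq g J G p0 p1 n lam ->
  (forall p, p0 <= p <= 0 -> M p = c * Mstar G p0 p1 n lam p) ->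
  solves_Pn g J G lam p0 p1 n M.
Proof.
  intros Hp01 Hp1 HG Hl Hn Hd HM.
  assert (Hn0 : 0 < INR n) by (apply lt_0_INR; lia).
  set (a1 := INR n * p1 / G). set (b1 := INR n * (p1 - p0) / lam).
  assert (Sa : sinh a1 < 0) by (apply sinh_neg; unfold a1; apply Rdiv_neg_pos; [nra|lra]).
  assert (Sb : 0 < sinh b1) by (apply sinh_pos; unfold b1; apply Rdiv_lt_0_compat; nra).
  set (mu := sinh a1 / sinh b1).
  destruct (sh_C2 (c * mu) (INR n / lam) (- INR n * p0 / lam)) as [CL [DL DDL]].
  destruct (sh_C2 c (INR n / G) 0) as [CR [DR DDR]].
  assert (ML : forall p, p0 <= p <= p1 ->
     c * mu * sinh (INR n / lam * p + - INR n * p0 / lam) = M p).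
  { intros p Hp. rewrite HM by lra. unfold Mstar. fold a1 b1 mu.
    destruct (Rle_dec p1 p).
    - assert (p = p1) by lra. subst p.
      replace (INR n / lam * p1 + - INR n * p0 / lam) with b1 by (unfold b1; field; lra).
      cbv zeta. change (INR n * p1 / G) with a1. change (INR n * (p1 - p0) / lam) with b1.
      unfold mu. field. lra.
    - cbv zeta. replace (INR n / lam * p + - INR n * p0 / lam) with (INR n * (p - p0) / lam) by (field; lra); ring. }
  assert (MR : forall p, p1 <= p <= 0 -> c * sinh (INR n / G * p + 0) = M p).
  { intros p Hp. rewrite HM by lra. unfold Mstar.
    destruct (Rle_dec p1 p); [|lra]. replace (INR n / G * p + 0) with (INR n * p / G) by (field; lra); ring. }
  exists (fun p => c * mu * sinh (INR n / lam * p + - INR n * p0 / lam)),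
         (fun p => c * sinh (INR n / G * p + 0)).
  split; [exact CL|]. split; [exact CR|]. split; [exact ML|]. split; [exact MR|].
  split; [|split; [|split; [|split]]].
  - intros p Hp. rewrite DDL. rewrite <- ML by lra. unfold a_lam.
    destruct (Rlt_dec p1 p); [lra|]. field. lra.
  - intros p Hp. rewrite DDR. rewrite <- MR by lra. unfold a_lam.
    destruct (Rlt_dec p1 p); [|lra]. field. lra.
  - rewrite DL, DR. rewrite <- MR by lra.
    replace (INR n / lam * p1 + - INR n * p0 / lam) with b1 by (unfold b1; field; lra).
    replace (INR n / G * p1 + 0) with a1 by (unfold a1; field; lra).
    unfold disp_eq, coth in Hd. fold a1 b1 in Hd.
    assert (HgJ : g * J = INR n * (G ^ 2 * (cosh a1 / sinh a1) - lam ^ 2 * (cosh b1 / sinh b1))).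
    { rewrite <- Hd. field. lra. }
    rewrite HgJ. unfold mu. field. lra.
  - rewrite HM by lra. unfold Mstar. destruct (Rle_dec p1 p0); [lra|].
    replace (INR n * (p0 - p0) / lam) with 0 by (field; lra). rewrite sinh_0. ring.
  - rewrite HM by lra. unfold Mstar. destruct (Rle_dec p1 0); [|lra].
    replace (INR n * 0 / G) with 0 by (field; lra). rewrite sinh_0. ring.
Qed.

Lemma coth_exp x : x <> 0 -> coth x = (exp x ^ 2 + 1) / (exp x ^ 2 - 1).
Proof.
  intros Hx. unfold coth, cosh, sinh. rewrite exp_Ropp.
  assert (H0 : 0 < exp x) by apply exp_pos.
  assert (exp x <> 1).
  { intros E. destruct (Rlt_or_le 0 x).
    - assert (exp 0 < exp x) by (apply exp_increasing; lra). rewrite exp_0 in *; lra.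
    - assert (exp x < exp 0) by (apply exp_increasing; lra). rewrite exp_0 in *; lra. }
  assert (exp x ^ 2 - 1 <> 0).
  { intros E. assert ((exp x - 1) * (exp x + 1) = 0) by (rewrite <- E; ring).
    apply Rmult_integral in H1. lra. }
  field. split; lra.
Qed.

Lemma exp_gt1 x : 0 < x -> 1 < exp x.
Proof. intros. rewrite <- exp_0. apply exp_increasing; lra. Qed.

Lemma coth_gt1 x : 0 < x -> 1 < coth x.
Proof.
  intros Hx. rewrite coth_exp by lra. assert (1 < exp x) by (apply exp_gt1; lra).
  assert (0 < exp x ^ 2 - 1) by nra.
  apply (Rmult_lt_reg_r (exp x ^ 2 - 1)); auto. unfold Rdiv. rewrite Rmult_assoc, Rinv_l by lra. lra.
Qed.

Lemma coth_lt x : 0 < x -> coth x < 1 + 1 / x.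
Proof.
  intros Hx. rewrite coth_exp by lra.
  assert (E : exp x ^ 2 = exp (2 * x)) by (replace (2 * x) with (x + x) by ring; rewrite exp_plus; ring).
  assert (1 + 2 * x < exp (2 * x)) by (apply exp_ineq1; lra).
  rewrite E. assert (0 < exp (2 * x) - 1) by lra.
  apply (Rmult_lt_reg_r (exp (2 * x) - 1)); auto. unfold Rdiv. rewrite Rmult_assoc, Rinv_l by lra.
  assert (0 < x * (exp (2 * x) - 1 - 2 * x)) by (apply Rmult_lt_0_compat; lra).
  replace ((1 + 1 * / x) * (exp (2 * x) - 1)) with (exp (2 * x) - 1 + (exp (2 * x) - 1) / x) by (field; lra).
  assert (2 < (exp (2 * x) - 1) / x).
  { apply (Rmult_lt_reg_r x); auto. unfold Rdiv. rewrite Rmult_assoc, Rinv_l by lra. lra. }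
  lra.
Qed.

Lemma coth_decr x y : 0 < x -> x < y -> coth y < coth x.
Proof.
  intros Hx Hxy. rewrite !coth_exp by lra.
  assert (1 < exp x) by (apply exp_gt1; lra).
  assert (exp x < exp y) by (apply exp_increasing; lra).
  assert (0 < exp x ^ 2 - 1) by nra. assert (0 < exp y ^ 2 - 1) by nra.
  assert (exp x ^ 2 < exp y ^ 2) by nra.
  apply (Rmult_lt_reg_r ((exp x ^ 2 - 1) * (exp y ^ 2 - 1))). nra.
  replace ((exp y ^ 2 + 1) / (exp y ^ 2 - 1) * ((exp x ^ 2 - 1) * (exp y ^ 2 - 1)))
    with ((exp y ^ 2 + 1) * (exp x ^ 2 - 1)) by (field; lra).
  replace ((exp x ^ 2 + 1) / (exp x ^ 2 - 1) * ((exp x ^ 2 - 1) * (exp y ^ 2 - 1)))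
    with ((exp x ^ 2 + 1) * (exp y ^ 2 - 1)) by (field; lra).
  nra.
Qed.

Definition hf (c l : R) := l ^ 2 * coth (c / l).

Lemma hf_incr c l l' : 0 < c -> 0 < l -> l < l' -> hf c l < hf c l'.
Proof.
  intros Hc Hl Hll. unfold hf.
  assert (c / l' < c / l).
  { unfold Rdiv. apply Rmult_lt_compat_l; auto. apply Rinv_lt_contravar; nra. }
  assert (0 < c / l') by (apply Rdiv_lt_0_compat; lra).
  assert (coth (c / l) < coth (c / l')) by (apply coth_decr; lra).
  assert (1 < coth (c / l)) by (apply coth_gt1, Rdiv_lt_0_compat; lra).
  assert (l ^ 2 < l' ^ 2) by nra.
  nra.
Qed.

Lemma hf_cont c l : 0 < c -> 0 < l -> continuity_pt (hf c) l.
Proof.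
  intros Hc Hl. apply continuity_pt_filterlim.
  apply (ex_derive_continuous (K:=R_AbsRing) (V:=R_NormedModule)).
  unfold hf, coth, cosh, sinh. auto_derive. repeat split; try lra.
  assert (0 < c / l) by (apply Rdiv_lt_0_compat; lra).
  assert (exp (- (c / l)) < exp (c / l)) by (apply exp_increasing; lra).
  unfold Rdiv in *. lra.
Qed.

Theorem lemma3p3 (g p0 p1 J Grel : R) :
  0 < g -> p0 < p1 -> p1 < 0 -> J < 0 -> 0 < Grel ->
  (forall n : nat, (1 <= n)%nat ->
     (forall lam, 0 < lam ->
        ((exists M, solves_Pn g J Grel lam p0 p1 n M /\ nontrivial p0 M)
         <-> disp_eq g J Grel p0 p1 n lam)) /\
     ((exists lam, 0 < lam /\ disp_eq g J Grel p0 p1 n lam)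
      <-> g * J / INR n - Grel ^ 2 * coth (INR n * p1 / Grel) < 0) /\
     (forall lam lam', 0 < lam -> 0 < lam' ->
        disp_eq g J Grel p0 p1 n lam -> disp_eq g J Grel p0 p1 n lam' ->
        lam = lam') /\
     (forall lam, 0 < lam -> disp_eq g J Grel p0 p1 n lam ->
        forall M, solves_Pn g J Grel lam p0 p1 n M <->
          exists c : R, forall p, p0 <= p <= 0 ->
             M p = c * Mstar Grel p0 p1 n lam p)) /\
  (forall lam, 0 < lam ->
     ((exists M, solves_P0 g J Grel lam p0 p1 M /\ nontrivial p0 M)
      <-> lam ^ 3 = - g * J * (p1 - p0))).
Proof.
  intros Hg Hp01 Hp1 HJ HG. split.
  - intros n Hn.
    assert (Hn0 : 0 < INR n) by (apply lt_0_INR; lia).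
    set (a1 := INR n * p1 / Grel).
    assert (Sa : sinh a1 < 0) by (apply sinh_neg; unfold a1; apply Rdiv_neg_pos; [nra|lra]).
    set (c := INR n * (p1 - p0)).
    assert (Hc : 0 < c) by (unfold c; nra).
    assert (Sb : forall lam, 0 < lam -> 0 < sinh (c / lam)).
    { intros lam Hl. apply sinh_pos, Rdiv_lt_0_compat; lra. }
    assert (Hdisp : forall lam, disp_eq g J Grel p0 p1 n lam <->
                     hf c lam = Grel ^ 2 * coth a1 - g * J / INR n).
    { intros lam. unfold disp_eq, hf. fold a1 c. split; intros; lra. }
    split; [|split; [|split]].
    + intros lam Hl. split.
      * intros [M [HM [p [Hp HMp]]]].
        destruct (Pn_struct g J Grel lam p0 p1 n M Hp01 Hp1 HG Hl Hn HM) as [A [B [MR [ML Jmp]]]].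
        fold a1 c in MR, ML, Jmp.
        assert (Hb1 : INR n * (p1 - p0) / lam = c / lam) by reflexivity.
        try rewrite Hb1 in ML; try rewrite Hb1 in Jmp.
        specialize (Sb lam Hl).
        assert (HAB : B * sinh (c / lam) = A * sinh a1).
        { transitivity (M p1); [rewrite (ML p1) by lra; reflexivity|rewrite (MR p1) by lra; reflexivity]. }
        assert (HA : A <> 0).
        { intros HA0. subst A. rewrite Rmult_0_l in HAB.
          assert (B = 0) by (apply Rmult_integral in HAB; destruct HAB; lra). subst B.
          apply HMp. destruct (Rle_dec p1 p).
          - rewrite MR by lra. ring.
          - rewrite ML by lra. ring. }
        assert (HBv : B = A * sinh a1 / sinh (c / lam)) by (rewrite <- HAB; field; lra).
        assert (HgJ : g * J = (Grel ^ 3 * (A * (INR n / Grel) * cosh a1) -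
                lam ^ 3 * (B * (INR n / lam) * cosh (c / lam))) / (A * sinh a1)).
        { rewrite Jmp, (MR p1) by lra. fold a1. field. split; lra. }
        unfold disp_eq, coth. fold a1 c. rewrite HgJ, HBv. field. repeat split; lra.
      * intros Hd. exists (Mstar Grel p0 p1 n lam). split.
        -- apply (Pn_from_c g J Grel lam p0 p1 n _ 1); auto. intros; ring.
        -- exists p1. split; [lra|]. unfold Mstar. destruct (Rle_dec p1 p1); [|lra].
           fold a1. lra.
    + split.
      * intros [lam [Hl Hd]]. apply Hdisp in Hd. unfold hf in Hd.
        assert (1 < coth (c / lam)) by (apply coth_gt1, Rdiv_lt_0_compat; lra).
        fold a1. nra.
      * intros HT. fold a1 in HT. set (T := Grel ^ 2 * coth a1 - g * J / INR n).
        assert (HT0 : 0 < T) by (unfold T; lra).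
        set (l0 := Rmin 1 (T / (2 * (1 + 1 / c)))).
        assert (Hk : 0 < 1 + 1 / c) by (assert (0 < 1 / c) by (apply Rdiv_lt_0_compat; lra); lra).
        assert (Hq : 0 < T / (2 * (1 + 1 / c))) by (apply Rdiv_lt_0_compat; lra).
        assert (Hl0 : 0 < l0) by (unfold l0; apply Rmin_glb_lt; lra).
        assert (Hl01 : l0 <= 1) by apply Rmin_l.
        assert (Hl0q : l0 <= T / (2 * (1 + 1 / c))) by apply Rmin_r.
        destruct (Ranalysis5.IVT_interv (fun l => hf c l - T) l0 (T + 1)) as [z [Hz Hfz]].
        -- intros x Hx. apply continuity_pt_minus; [apply hf_cont; lra|apply continuity_pt_const].
           intros u v; reflexivity.
        -- lra.
        -- unfold hf. 
           assert (H1 : coth (c / l0) < 1 + 1 / (c / l0)) by (apply coth_lt, Rdiv_lt_0_compat; lra).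
           replace (1 + 1 / (c / l0)) with (1 + l0 * (1 / c)) in H1 by (field; lra).
           assert (H2 : l0 * (1 + 1 / c) <= T / 2).
           { apply (Rmult_le_reg_r (/ (1 + 1 / c))). apply Rinv_0_lt_compat; lra.
             replace (l0 * (1 + 1 / c) * / (1 + 1 / c)) with l0 by (field; lra).
             replace (T / 2 * / (1 + 1 / c)) with (T / (2 * (1 + 1 / c))) by (field; lra). lra. }
           assert (0 < 1 / c) by (apply Rdiv_lt_0_compat; lra).
           assert (l0 ^ 2 * coth (c / l0) < l0 ^ 2 * (1 + l0 * (1 / c))) by
             (apply Rmult_lt_compat_l; [apply pow_lt; lra|exact H1]).
           assert (l0 ^ 2 <= l0) by (simpl; nra).
           assert (l0 ^ 2 * l0 <= l0) by nra.
           assert (l0 ^ 2 * l0 * (1 / c) <= l0 * (1 / c)) by (apply Rmult_le_compat_r; lra).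
           assert (l0 ^ 2 * (1 + l0 * (1 / c)) <= l0 * (1 + 1 / c)) by nra.
           lra.
        -- unfold hf.
           assert (1 < coth (c / (T + 1))) by (apply coth_gt1, Rdiv_lt_0_compat; lra).
           assert ((T + 1) ^ 2 * 1 < (T + 1) ^ 2 * coth (c / (T + 1))) by
             (apply Rmult_lt_compat_l; [apply pow_lt; lra|lra]).
           assert (0 < T * T) by (apply Rmult_lt_0_compat; lra). replace ((T + 1) ^ 2) with (T * T + 2 * T + 1) in * by ring. lra.
        -- exists z. split; [lra|]. apply Hdisp. cbv beta in Hfz. unfold T in Hfz. lra.
    + intros lam lam' Hl Hl' Hd Hd'. apply Hdisp in Hd, Hd'.
      destruct (Rtotal_order lam lam') as [H|[H|H]]; auto.
      * pose proof (hf_incr c lam lam' Hc Hl H). lra.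
      * pose proof (hf_incr c lam' lam Hc Hl' H). lra.
    + intros lam Hl Hd M. split.
      * intros HM.
        destruct (Pn_struct g J Grel lam p0 p1 n M Hp01 Hp1 HG Hl Hn HM) as [A [B [MR [ML _]]]].
        fold a1 in MR. fold c in ML.
        assert (Hb1 : INR n * (p1 - p0) / lam = c / lam) by reflexivity.
        try rewrite Hb1 in ML. specialize (Sb lam Hl).
        assert (HAB : B * sinh (c / lam) = A * sinh a1).
        { transitivity (M p1); [rewrite (ML p1) by lra; reflexivity|rewrite (MR p1) by lra; reflexivity]. }
        exists A. intros p Hp. unfold Mstar. cbv zeta. destruct (Rle_dec p1 p).
        -- apply MR; lra.
        -- rewrite ML by lra. fold a1 c.
           assert (HBv : B = A * sinh a1 / sinh (c / lam)) by (rewrite <- HAB; field; lra). rewrite HBv. unfold Rdiv.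
           ring.
      * intros [c0 Hc0]. apply (Pn_from_c g J Grel lam p0 p1 n M c0); auto.
  - intros lam Hl. split.
    + intros [M [[FL [FR [CL [CR [EL [ER [OL [OR [Jmp [B0 B1]]]]]]]]]] [p [Hp HMp]]]].
      assert (HL0 : forall x, p0 < x < p1 -> Derive (Derive FL) x = 0).
      { intros x Hx. specialize (OL x Hx). unfold a_lam in OL.
        destruct (Rlt_dec p1 x); [lra|].
        apply Rmult_integral in OL. destruct OL as [OL|OL]; auto.
        exfalso. apply pow_nonzero in OL; lra. }
      assert (HR0 : forall x, p1 < x < 0 -> Derive (Derive FR) x = 0).
      { intros x Hx. specialize (OR x Hx). unfold a_lam in OR.
        destruct (Rlt_dec p1 x); [|lra].
        apply Rmult_integral in OR. destruct OR as [OR|OR]; auto.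
        exfalso. apply pow_nonzero in OR; lra. }
      assert (LL := ode_lin FL p0 p1 CL HL0).
      assert (LR := ode_lin FR p1 0 CR HR0).
      assert (F0 : FL p0 = 0) by (rewrite EL by lra; exact B0).
      assert (HdR : Derive FR p1 = 0).
      { destruct (LR 0) as [H _]; [lra|]. rewrite ER in H by lra. rewrite B1, <- (ER p1) in H by lra.
        assert (Derive FR p1 * p1 = 0) by lra.
        apply Rmult_integral in H0. destruct H0; lra. }
      destruct (LL p1) as [Hv1 Hd1]; [lra|].
      assert (Mp1 : M p1 = Derive FL p0 * (p1 - p0)) by (rewrite <- EL by lra; lra).
      rewrite HdR, Hd1, Mp1 in Jmp.
      destruct (Req_dec (Derive FL p0) 0) as [Hz|Hnz].
      * exfalso. apply HMp. destruct (Rle_dec p1 p).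
        -- rewrite <- ER by lra. destruct (LR p) as [H _]; [lra|]. rewrite H, HdR, ER, Mp1, Hz by lra. ring.
        -- rewrite <- EL by lra. destruct (LL p) as [H _]; [lra|]. rewrite H, F0, Hz. ring.
      * apply (Rmult_eq_reg_l (Derive FL p0)); auto. lra.
    + intros H3.
      exists (fun p => if Rle_dec p1 p then p1 - p0 else p - p0). split.
      * destruct (lin_C2 1 (- p0)) as [CL [DL DDL]].
        destruct (lin_C2 0 (p1 - p0)) as [CR [DR DDR]].
        exists (fun p => 1 * p + - p0), (fun p => 0 * p + (p1 - p0)).
        split; [exact CL|]. split; [exact CR|].
        split; [intros p Hp; destruct (Rle_dec p1 p); [assert (p = p1) by lra; subst; ring|ring]|].
        split; [intros p Hp; destruct (Rle_dec p1 p); [ring|lra]|].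
        split; [intros p Hp; rewrite DDL; ring|].
        split; [intros p Hp; rewrite DDR; ring|].
        rewrite DL, DR. destruct (Rle_dec p1 p1); [|lra].
        split; [rewrite H3; ring|].
        destruct (Rle_dec p1 p0); [lra|]. destruct (Rle_dec p1 0); [|lra]. split; ring.
      * exists p1. split; [lra|]. destruct (Rle_dec p1 p1); lra.
Qed.
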